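(* For every real $x\ge 1$, $$\frac{\log x}{\zeta(2)}+1-\frac{\log 2}{\zeta(2)}\;<\;\sum_{n\le x}\frac{\varphi(n)}{n^2}\;\le\;\frac{\log x}{\zeta(2)}+1 .$$
   Context: $\varphi$ is Euler's totient function, $\zeta$ is the Riemann zeta function, $\log$ is the natural logarithm, and the sum runs over positive integers $n\le x$. *)

(* Defs.v *)
From Stdlib Require Import Reals.
From mathcomp Require Import ssreflect ssrnat prime.

Definition phi (n : nat) : nat := totient n.

Open Scope R_scope.

(* zeta(2) = sum_{n>=1} 1/n^2 ; index k corresponds to n = k+1. *)
Definition zeta2_series (k : nat) : R := / (INR (S k)) ^ 2.

Definition term (n : nat) : R := INR (phi n) / (INR n) ^ 2.

(* Main.v *)
Require Import Defs.
From Stdlib Require Import Reals Lra Lia QArith Qreals List.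
From Coquelicot Require Import Coquelicot.
From mathcomp Require Import all_boot cyclic zify.
Open Scope nat_scope.

Lemma divdiv n d : 0 < n -> d %| n -> n %/ (n %/ d) = d.
Proof.
move=> n0 Hd.
have d0 : 0 < d by move: Hd; case: d => //; rewrite dvd0n => /eqP E; rewrite E in n0.
have q0 : 0 < n %/ d by rewrite divn_gt0 // dvdn_leq.
by rewrite -{1}(divnK Hd) mulKn.
Qed.

Lemma divsum n : 0 < n -> \sum_(m < n.+1 | m %| n) totient (n %/ m) = n.
Proof.
move=> n0.
apply: eq_trans _ (sum_totient_dvd n).
have hv : forall d : 'I_n.+1, nat_of_ord (inord (n %/ d) : 'I_n.+1) = n %/ d.
  by move=> d; rewrite inordK // ltnS leq_div.
have hc : forall d : 'I_n.+1, ((inord (n %/ d) : 'I_n.+1) %| n) && ((inord (n %/ (inord (n %/ d) : 'I_n.+1)) : 'I_n.+1) == d) = (d %| n).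
  move=> d; rewrite hv; apply/idP/idP.
  + move=> /andP [Hd /eqP He].
    have := f_equal (@nat_of_ord _) He. rewrite inordK ?ltnS ?leq_div // => E.
    rewrite -E. by apply: dvdn_div Hd.
  + move=> Hd. apply/andP; split; first by apply: dvdn_div Hd.
    apply/eqP; apply: val_inj => /=. by rewrite inordK ?ltnS ?leq_div // divdiv.
rewrite (reindex_onto (fun d : 'I_n.+1 => inord (n %/ d) : 'I_n.+1) (fun d : 'I_n.+1 => inord (n %/ d) : 'I_n.+1)) /=.
- apply: eq_big => [d|d]; first by rewrite hc.
  rewrite hc => Hd. by rewrite hv divdiv.
- move=> d Hd. apply: val_inj => /=. by rewrite !hv divdiv.
Qed.

Open Scope R_scope.

Fixpoint sr (f : nat -> R) (n : nat) : R :=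
  match n with O => 0 | S k => sr f k + f (S k) end.

Lemma sr_ext f g n : (forall m, (1 <= m <= n)%N -> f m = g m) -> sr f n = sr g n.
Proof.
elim: n => [//|n IH] H /=. rewrite IH; last by move=> m /andP[h1 h2]; apply: H; rewrite h1 ltnW.
by rewrite H // leqnn.
Qed.

Lemma sr_le f g n : (forall m, (1 <= m <= n)%N -> f m <= g m) -> sr f n <= sr g n.
Proof.
elim: n => [|n IH] H; first by simpl; lra.
simpl.
have h1 := IH (fun m (hm : (1 <= m <= n)%N) => H m (ltac:(case/andP: hm => a b; by rewrite a ltnW))).
have h2 : f n.+1 <= g n.+1 by apply: H; rewrite leqnn.
lra.
Qed.

Lemma sr_plus f g n : sr (fun m => f m + g m) n = sr f n + sr g n.
Proof. elim: n => [|n IH] /=; [lra| rewrite IH; lra]. Qed.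

Lemma sr_scal c f n : sr (fun m => c * f m) n = c * sr f n.
Proof. elim: n => [|n IH] /=; [lra| rewrite IH; lra]. Qed.

Lemma sr_opp f n : sr (fun m => - f m) n = - sr f n.
Proof. elim: n => [|n IH] /=; [lra| rewrite IH; lra]. Qed.

Lemma sr_INR (g : nat -> nat) n : g 0%N = 0%N ->
  sr (fun m => INR (g m)) n = INR (\sum_(m < n.+1) g m).
Proof.
move=> g0; elim: n => [|n IH] /=.
- by rewrite big_ord_recr big_ord0 /= g0.
- by rewrite IH [in RHS]big_ord_recr /= plus_INR.
Qed.


Definition Sr (N : nat) : R := sr term N.
Definition Hr (N : nat) : R := sr (fun n => / INR n) N.

Lemma divsum_R n : (0 < n)%N ->
  sr (fun m => if (m %| n)%N then INR (totient (n %/ m)) else 0) n = INR n.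
Proof.
move=> n0.
rewrite (sr_ext _ (fun m => INR (if (m %| n)%N then totient (n %/ m) else 0%N))); last first.
  by move=> m _; case: ifP.
rewrite sr_INR; last by rewrite dvd0n; case: n n0 => [//|n] _.
rewrite -big_mkcond /=. by rewrite divsum.
Qed.

Lemma Sr_S n : Sr n.+1 = Sr n + term n.+1.
Proof. by []. Qed.

Lemma Sr_divS N m : (0 < m)%N ->
  Sr (N.+1 %/ m) = Sr (N %/ m) + (if (m %| N.+1)%N then term (N.+1 %/ m) else 0).
Proof.
move=> m0. case: ifP => Hd.
- have E : N.+1 %/ m = (N %/ m).+1 by rewrite divnS // Hd.
  by rewrite E Sr_S.
- have E : N.+1 %/ m = N %/ m by rewrite divnS // Hd.
  rewrite E; lra.
Qed.

Lemma INR_pos n : (0 < n)%N -> 0 < INR n.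
Proof. move=> h; apply: lt_0_INR; apply/ltP. exact h. Qed.

Lemma ident N : Hr N = sr (fun m => Sr (N %/ m) / INR m ^ 2) N.
Proof.
elim: N => [|N IH]; first by [].
have n0 : 0 < INR N.+1 by apply: INR_pos.
rewrite (sr_ext _ (fun m => Sr (N %/ m) / INR m ^ 2 +
     / INR N.+1 ^ 2 * (if (m %| N.+1)%N then INR (totient (N.+1 %/ m)) else 0))); last first.
  move=> m /andP[m1 mn]. rewrite Sr_divS //.
  have m0 : 0 < INR m by apply: INR_pos.
  case: ifP => Hd; last by field; lra.
  rewrite /term /phi.
  have E : INR (N.+1 %/ m) * INR m = INR N.+1 by rewrite -mult_INR; congr INR; exact: (divnK Hd).
  have q0 : 0 < INR (N.+1 %/ m) by have := pos_INR (N.+1 %/ m); nra.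
  rewrite -E; field; lra.
rewrite sr_plus sr_scal divsum_R //.
have -> : sr (fun m => Sr (N %/ m) / INR m ^ 2) N.+1 =
   sr (fun m => Sr (N %/ m) / INR m ^ 2) N + Sr (N %/ N.+1) / INR N.+1 ^ 2 by [].
rewrite -IH divn_small //.
have -> : Hr N.+1 = Hr N + / INR N.+1 by [].
have -> : Sr 0 = 0 by [].
field; lra.
Qed.

Definition s1 (N : nat) : R := sr (fun n => / INR n ^ 2) N.
Definition Tr (N : nat) : R := sr (fun n => ln (INR n) / INR n ^ 2) N.

Lemma sum_zeta n : sum_f_R0 zeta2_series n = s1 n.+1.
Proof.
elim: n => [|n IH].
- rewrite /s1 /zeta2_series /=. ring.
- rewrite /= IH /zeta2_series. by [].
Qed.

Lemma INR_ge1 {m} : (1 <= m)%N -> 1 <= INR m.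
Proof. move=> h; apply: (le_INR 1); by apply/leP. Qed.

Lemma inv_sq_le m : (1 <= m)%N -> / INR m.+1 ^ 2 <= / INR m - / INR m.+1.
Proof.
move=> m1. have h := INR_ge1 m1.
rewrite S_INR.
have -> : / INR m - / (INR m + 1) = / (INR m * (INR m + 1)) by field; lra.
apply: Rinv_le_contravar; nra.
Qed.

Lemma inv_sq_ge m : (1 <= m)%N -> / INR m.+1 - / INR m.+2 <= / INR m.+1 ^ 2.
Proof.
move=> m1. have h := INR_ge1 m1.
rewrite !S_INR.
have -> : / (INR m + 1) - / (INR m + 1 + 1) = / ((INR m + 1) * (INR m + 1 + 1)) by field; lra.
apply: Rinv_le_contravar; nra.
Qed.

Lemma s1_diff N k : (1 <= N)%N ->
  / INR N.+1 - / INR (N + k).+1 <= s1 (N + k) - s1 N <= / INR N - / INR (N + k).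
Proof.
move=> N1. elim: k => [|k IH].
- rewrite addn0; lra.
- rewrite addnS.
  have -> : s1 (N + k).+1 = s1 (N + k) + / INR (N + k).+1 ^ 2 by [].
  have h1 := inv_sq_le (N + k) (leq_trans N1 (leq_addr _ _)).
  have h2 := inv_sq_ge (N + k) (leq_trans N1 (leq_addr _ _)).
  lra.
Qed.

Lemma tau_bounds z (hz : infinite_sum zeta2_series z) N : (1 <= N)%N ->
  / INR N.+1 <= z - s1 N <= / INR N.
Proof.
move=> N1. have hN := INR_ge1 N1.
split.
- apply: Rnot_lt_le => H.
  set e := (/ INR N.+1 - (z - s1 N)) / 2.
  have e0 : 0 < e by rewrite /e; lra.
  case: (hz e e0) => M HM.
  case: (archimed_cor1 e e0) => M2 [HM2 M20].
  set n := (M + M2 + N)%N.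
  have Hn : (n >= M)%coq_nat by apply/leP; rewrite /n; lia.
  have := HM n Hn. rewrite sum_zeta /R_dist => Hab.
  have Hd := s1_diff N (n.+1 - N) N1.
  have E : (N + (n.+1 - N))%N = n.+1 by rewrite subnKC // /n; lia.
  rewrite E in Hd.
  have : / INR n.+2 <= / INR M2.
    apply: Rinv_le_contravar; first by apply: (lt_0_INR _ M20).
    apply: le_INR. apply/leP. rewrite /n; lia.
  move=> Hc. move/Rabs_def2: Hab => [Ha Hb]. rewrite /e in Ha Hb HM2. lra.
- apply: Rnot_lt_le => H.
  set e := ((z - s1 N) - / INR N) / 2.
  have e0 : 0 < e by rewrite /e; lra.
  case: (hz e e0) => M HM.
  set n := (M + N)%N.
  have Hn : (n >= M)%coq_nat by apply/leP; rewrite /n; lia.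
  have := HM n Hn. rewrite sum_zeta /R_dist => Hab.
  have Hd := s1_diff N (n.+1 - N) N1.
  have E : (N + (n.+1 - N))%N = n.+1 by rewrite subnKC // /n; lia.
  rewrite E in Hd.
  have : 0 < / INR n.+1 by apply: Rinv_0_lt_compat; apply: lt_0_INR; apply/ltP.
  move=> Hc. move/Rabs_def2: Hab => [Ha Hb]. rewrite /e in Ha Hb. lra.
Qed.


Lemma mvt_nonneg (f df : R -> R) (t : R) :
  0 <= t < 1 ->
  (forall c, 0 <= c <= t -> is_derive f c (df c)) ->
  (forall c, 0 <= c <= t -> 0 <= df c) ->
  f 0 <= f t.
Proof.
  intros [H0 H1] Hd Hp.
  destruct (Req_dec t 0) as [E|E]. { subst; lra. }
  destruct (MVT_cor2 f df 0 t) as [c [Hc1 Hc2]]; [lra| |].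
  { intros c Hc. apply is_derive_Reals. apply Hd; lra. }
  assert (0 <= df c) by (apply Hp; lra). nra.
Qed.

Lemma atanh_lo (t : R) : 0 <= t < 1 ->
  2 * t + 2 * t^3 / 3 <= ln (1 + t) - ln (1 - t).
Proof.
  intros Ht.
  set (f := fun x => ln (1 + x) - ln (1 - x) - (2 * x + 2 * x^3 / 3)).
  assert (f 0 <= f t).
  { apply (mvt_nonneg f (fun x => 2 * x^4 / (1 - x^2))); auto.
    - intros c Hc. unfold f. auto_derive.
      + repeat split; lra.
      + field. split; try lra. nra.
    - intros c Hc. apply Rmult_le_pos. nra. apply Rlt_le, Rinv_0_lt_compat. nra. }
  unfold f in H. replace (1 + 0) with 1 in H by ring. replace (1 - 0) with 1 in H by ring.
  rewrite ln_1 in H. lra.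
Qed.

Lemma atanh_hi (t : R) : 0 <= t < 1 ->
  ln (1 + t) - ln (1 - t) <= 2 * t + 2 * t^3 / (3 * (1 - t^2)).
Proof.
  intros Ht.
  set (f := fun x => 2 * x + 2 * x^3 / (3 * (1 - x^2)) - (ln (1 + x) - ln (1 - x))).
  assert (f 0 <= f t).
  { apply (mvt_nonneg f (fun x => 4 * x^4 / (3 * (1 - x^2)^2))); auto.
    - intros c Hc. unfold f. auto_derive.
      + repeat split; try lra. nra.
      + field. split; try lra. nra.
    - intros c Hc. apply Rmult_le_pos. nra. apply Rlt_le, Rinv_0_lt_compat.
      assert (0 < 1 - c^2) by nra. nra. }
  unfold f in H. replace (1 + 0) with 1 in H by ring. replace (1 - 0) with 1 in H by ring.
  rewrite ln_1 in H. replace (2 * 0 + 2 * 0 ^ 3 / (3 * (1 - 0 ^ 2)) - (0 - 0)) with 0 in H by field. lra.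
Qed.

Definition lo_r (n : nat) : R := 2 / (2 * INR n + 1) + 2 / (3 * (2 * INR n + 1) ^ 3).
Definition hi_r (n : nat) : R := 2 / (2 * INR n + 1) + 1 / (6 * INR n * (INR n + 1) * (2 * INR n + 1)).

Lemma lnstep n : (1 <= n)%N ->
  lo_r n <= ln (INR n.+1) - ln (INR n) <= hi_r n.
Proof.
move=> n1. have h := INR_ge1 n1.
set t := / (2 * INR n + 1).
have t0 : 0 <= t < 1.
  rewrite /t; split; first by apply: Rlt_le; apply: Rinv_0_lt_compat; lra.
  rewrite -Rinv_1; apply: Rinv_lt_contravar; lra.
have E : ln (1 + t) - ln (1 - t) = ln (INR n.+1) - ln (INR n).
  rewrite S_INR -ln_div; [|lra|lra]. rewrite -ln_div; [|lra|lra]. f_equal.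
  rewrite /t. field. lra.
have L := atanh_lo t t0. have U := atanh_hi t t0.
rewrite -E. split.
- apply: Rle_trans L. rewrite /lo_r /t. apply: Req_le. field. lra.
- apply: Rle_trans U _. rewrite /hi_r /t. apply: Req_le. field. repeat split; try lra. nra.
Qed.

Definition qn (n : nat) : Q := inject_Z (Z.of_nat n).
Definition loQ (n : nat) : Q :=
  (qn 2 / qn (2*n+1) + qn 2 / (qn 3 * (qn (2*n+1) * qn (2*n+1) * qn (2*n+1))))%Q.
Definition hiQ (n : nat) : Q :=
  (qn 2 / qn (2*n+1) + qn 1 / (qn 6 * qn n * qn (n+1) * qn (2*n+1)))%Q.
Fixpoint lnLQ (n : nat) : Q :=
  match n with O => 0%Q | S k => match k with O => 0%Q | _ => Qred (lnLQ k + loQ k)%Q end end.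
Fixpoint lnUQ (n : nat) : Q :=
  match n with O => 0%Q | S k => match k with O => 0%Q | _ => Qred (lnUQ k + hiQ k)%Q end end.

Lemma Q2R_qn n : Q2R (qn n) = INR n.
Proof. rewrite /qn /Q2R /= INR_IZR_INZ. field. Qed.

Lemma Q2R_red q : Q2R (Qred q) = Q2R q.
Proof. apply: Qeq_eqR. apply: Qred_correct. Qed.

Lemma Q2R_div' x y : Q2R y <> 0 -> Q2R (x / y) = Q2R x / Q2R y.
Proof.
move=> H. apply: Q2R_div. move=> E. apply: H. rewrite (Qeq_eqR _ _ E). rewrite /Q2R /=. ring.
Qed.

Lemma Q2R_inv' x : Q2R x <> 0 -> Q2R (/ x) = / Q2R x.
Proof.
move=> H. apply: Q2R_inv. move=> E. apply: H. rewrite (Qeq_eqR _ _ E). rewrite /Q2R /=. ring.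
Qed.

Ltac qpush := repeat (rewrite ?Q2R_red ?Q2R_plus ?Q2R_minus ?Q2R_mult ?Q2R_qn ?Q2R_inv').

Lemma INR_2n1 n : INR (2 * n + 1) = 2 * INR n + 1.
Proof. rewrite plus_INR mult_INR /=. ring. Qed.

Lemma loQ_R n : Q2R (loQ n) = lo_r n.
Proof.
have h := pos_INR n.
rewrite /loQ. qpush; rewrite ?INR_2n1 /lo_r; simpl INR.
- field; lra.
all: try (simpl INR; nra).
Qed.

Lemma hiQ_R n : (1 <= n)%N -> Q2R (hiQ n) = hi_r n.
Proof.
move=> n1. have h := INR_ge1 n1.
rewrite /hiQ. qpush; rewrite ?INR_2n1 ?plus_INR /hi_r; simpl INR.
- field; lra.
all: try (simpl INR; nra).
Qed.

Lemma lnLQ_le n : (1 <= n)%N -> Q2R (lnLQ n) <= ln (INR n).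
Proof.
elim: n => [//|k IH] _.
case: k IH => [|k] IH.
- rewrite /= /Q2R /= ln_1. lra.
- have -> : lnLQ k.+2 = Qred (lnLQ k.+1 + loQ k.+1)%Q by [].
  rewrite Q2R_red Q2R_plus loQ_R. have := IH is_true_true. have := lnstep k.+1 is_true_true. lra.
Qed.

Lemma lnUQ_ge n : (1 <= n)%N -> ln (INR n) <= Q2R (lnUQ n).
Proof.
elim: n => [//|k IH] _.
case: k IH => [|k] IH.
- rewrite /= /Q2R /= ln_1. lra.
- have -> : lnUQ k.+2 = Qred (lnUQ k.+1 + hiQ k.+1)%Q by [].
  rewrite Q2R_red Q2R_plus hiQ_R //. have := IH is_true_true. have := lnstep k.+1 is_true_true. lra.
Qed.

Fixpoint SQ (n : nat) : Q := match n with O => 0%Q | S k => Qred (SQ k + qn (totient (S k)) / (qn (S k) * qn (S k)))%Q end.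
Fixpoint HQ (n : nat) : Q := match n with O => 0%Q | S k => Qred (HQ k + qn 1 / qn (S k))%Q end.
Fixpoint s1Q (n : nat) : Q := match n with O => 0%Q | S k => Qred (s1Q k + qn 1 / (qn (S k) * qn (S k)))%Q end.
Fixpoint TLQ (n : nat) : Q := match n with O => 0%Q | S k => Qred (TLQ k + lnLQ (S k) / (qn (S k) * qn (S k)))%Q end.
Fixpoint TUQ (n : nat) : Q := match n with O => 0%Q | S k => Qred (TUQ k + lnUQ (S k) / (qn (S k) * qn (S k)))%Q end.

Lemma Q2R0 : Q2R 0%Q = 0.
Proof. rewrite /Q2R /=. field. Qed.

Lemma INR_S_pos k : 0 < INR k.+1.
Proof. apply: lt_0_INR. apply/ltP. by []. Qed.

Lemma SQ_R n : Q2R (SQ n) = Sr n.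
Proof.
elim: n => [|k IH]; first by rewrite Q2R0.
have -> : SQ k.+1 = Qred (SQ k + qn (totient k.+1) / (qn k.+1 * qn k.+1))%Q by [].
have h := INR_S_pos k.
rewrite Q2R_red Q2R_plus IH Sr_S Q2R_mult Q2R_inv' Q2R_mult ?Q2R_qn /term /phi.
- field. lra.
- rewrite ?Q2R_mult ?Q2R_qn. nra.
Qed.

Lemma HQ_R n : Q2R (HQ n) = Hr n.
Proof.
elim: n => [|k IH]; first by rewrite Q2R0.
have -> : HQ k.+1 = Qred (HQ k + qn 1 / qn k.+1)%Q by [].
have h := INR_S_pos k.
have -> : Hr k.+1 = Hr k + / INR k.+1 by [].
rewrite Q2R_red Q2R_plus IH Q2R_mult Q2R_inv' ?Q2R_qn.
- simpl INR at 1. field. lra.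
- lra.
Qed.

Lemma s1Q_R n : Q2R (s1Q n) = s1 n.
Proof.
elim: n => [|k IH]; first by rewrite Q2R0.
have -> : s1Q k.+1 = Qred (s1Q k + qn 1 / (qn k.+1 * qn k.+1))%Q by [].
have h := INR_S_pos k.
have -> : s1 k.+1 = s1 k + / INR k.+1 ^ 2 by [].
rewrite Q2R_red Q2R_plus IH Q2R_mult Q2R_inv' ?Q2R_mult ?Q2R_qn.
- simpl INR at 1. field. lra.
- nra.
Qed.

Lemma TLQ_le n : Q2R (TLQ n) <= Tr n.
Proof.
elim: n => [|k IH]; first by rewrite Q2R0 /Tr /=; lra.
have -> : TLQ k.+1 = Qred (TLQ k + lnLQ k.+1 / (qn k.+1 * qn k.+1))%Q by [].
have h := INR_S_pos k.
have -> : Tr k.+1 = Tr k + ln (INR k.+1) / INR k.+1 ^ 2 by [].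
rewrite Q2R_red Q2R_plus Q2R_mult Q2R_inv' ?Q2R_mult ?Q2R_qn; last by nra.
have := lnLQ_le k.+1 is_true_true.
have : 0 < / (INR k.+1 * INR k.+1) by apply: Rinv_0_lt_compat; nra.
have -> : INR k.+1 ^ 2 = INR k.+1 * INR k.+1 by ring.
move=> h1 h2. have := Rmult_le_compat_r _ _ _ (Rlt_le _ _ h1) h2. rewrite /Rdiv. lra.
Qed.

Lemma TUQ_ge n : Tr n <= Q2R (TUQ n).
Proof.
elim: n => [|k IH]; first by rewrite Q2R0 /Tr /=; lra.
have -> : TUQ k.+1 = Qred (TUQ k + lnUQ k.+1 / (qn k.+1 * qn k.+1))%Q by [].
have h := INR_S_pos k.
have -> : Tr k.+1 = Tr k + ln (INR k.+1) / INR k.+1 ^ 2 by [].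
rewrite Q2R_red Q2R_plus Q2R_mult Q2R_inv' ?Q2R_mult ?Q2R_qn; last by nra.
have := lnUQ_ge k.+1 is_true_true.
have : 0 < / (INR k.+1 * INR k.+1) by apply: Rinv_0_lt_compat; nra.
have -> : INR k.+1 ^ 2 = INR k.+1 * INR k.+1 by ring.
move=> h1 h2. have := Rmult_le_compat_r _ _ _ (Rlt_le _ _ h1) h2. rewrite /Rdiv. lra.
Qed.

Definition zloQ : Q := (s1Q 60 + qn 1 / qn 61)%Q.
Definition zhiQ : Q := (s1Q 60 + qn 1 / qn 60)%Q.

Lemma Qle_R a b : Qle_bool a b = true -> Q2R a <= Q2R b.
Proof. move=> H. apply: Qle_Rle. by apply/Qle_bool_iff. Qed.

Lemma Q2R_mk a b : Q2R (Qmake a b) = IZR a / IZR (Zpos b).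
Proof. by []. Qed.

Lemma zloQ_R : Q2R zloQ = s1 60 + / 61.
Proof.
rewrite /zloQ Q2R_plus s1Q_R Q2R_mult Q2R_inv' !Q2R_qn !INR_IZR_INZ /=; lra.
Qed.

Lemma zhiQ_R : Q2R zhiQ = s1 60 + / 60.
Proof.
rewrite /zhiQ Q2R_plus s1Q_R Q2R_mult Q2R_inv' !Q2R_qn !INR_IZR_INZ /=; lra.
Qed.

Lemma num_z1 : 1.64479 <= s1 60 + / 61.
Proof.
have := Qle_R (164479 # 100000) zloQ (ltac:(vm_compute; reflexivity)).
rewrite zloQ_R Q2R_mk. lra.
Qed.

Lemma num_z2 : s1 60 + / 60 <= 1.64508.
Proof.
have := Qle_R zhiQ (164508 # 100000) (ltac:(vm_compute; reflexivity)).
rewrite zhiQ_R Q2R_mk. lra.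
Qed.

Lemma num_s1 : 1.6 <= s1 60.
Proof.
have := Qle_R (16 # 10) (s1Q 60) (ltac:(vm_compute; reflexivity)).
rewrite s1Q_R Q2R_mk. lra.
Qed.

Lemma ln2_b : 0.69135 <= ln 2 <= 0.69445.
Proof.
have := lnstep 1 is_true_true.
have -> : INR 2 = 2 by simpl; ring.
have -> : INR 1 = 1 by [].
rewrite ln_1 /lo_r /hi_r.
have -> : INR 1 = 1 by [].
have E1 : 2 / (2 * 1 + 1) + 2 / (3 * (2 * 1 + 1) ^ 3) = 56 / 81 by field.
have E2 : 2 / (2 * 1 + 1) + 1 / (6 * 1 * (1 + 1) * (2 * 1 + 1)) = 25 / 36 by field.
rewrite E1 E2. lra.
Qed.

Lemma ln32_b : ln 3 - ln 2 <= 0.40556.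
Proof.
have := lnstep 2 is_true_true.
have -> : INR 3 = 3 by simpl; ring.
have -> : INR 2 = 2 by simpl; ring.
rewrite /hi_r.
have -> : INR 2 = 2 by simpl; ring.
have E2 : 2 / (2 * 2 + 1) + 1 / (6 * 2 * (2 + 1) * (2 * 2 + 1)) = 73 / 180 by field.
rewrite E2. lra.
Qed.

Definition Dp (z : R) (N : nat) : R := z * Hr N - s1 N * ln (INR N) + Tr N.

Lemma Dp_inc z N : Dp z N.+1 - Dp z N = z / INR N.+1 - s1 N * (ln (INR N.+1) - ln (INR N)).
Proof.
have h := INR_S_pos N.
rewrite /Dp.
have -> : Hr N.+1 = Hr N + / INR N.+1 by [].
have -> : s1 N.+1 = s1 N + / INR N.+1 ^ 2 by [].
have -> : Tr N.+1 = Tr N + ln (INR N.+1) / INR N.+1 ^ 2 by [].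
field. lra.
Qed.

Lemma div_nonneg a b : 0 <= a -> 0 < b -> 0 <= a / b.
Proof. move=> ha hb. apply: Rmult_le_pos => //. apply: Rlt_le. by apply: Rinv_0_lt_compat. Qed.

Lemma hi_le_trap n : (1 <= n)%N -> hi_r n <= (2 * INR n + 1) / (2 * INR n * (INR n + 1)).
Proof.
move=> n1. have h := INR_ge1 n1. rewrite /hi_r.
apply: Rminus_le.
have -> : 2 / (2 * INR n + 1) + 1 / (6 * INR n * (INR n + 1) * (2 * INR n + 1)) -
  (2 * INR n + 1) / (2 * INR n * (INR n + 1)) = - (2 / (6 * INR n * (INR n + 1) * (2 * INR n + 1))).
  field. lra.
have : 0 <= 2 / (6 * INR n * (INR n + 1) * (2 * INR n + 1)) by apply: div_nonneg; nra.
lra.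
Qed.

Lemma lo_ge n : (1 <= n)%N -> 2 / (2 * INR n + 1) <= lo_r n.
Proof.
move=> n1. have h := INR_ge1 n1. rewrite /lo_r.
have : 0 <= 2 / (3 * (2 * INR n + 1) ^ 3) by apply: div_nonneg; nra.
lra.
Qed.

Lemma hi_le_inv n : (1 <= n)%N -> hi_r n <= / INR n.
Proof.
move=> n1. have h := INR_ge1 n1. apply: Rle_trans (hi_le_trap n n1) _.
apply: Rminus_le.
have -> : (2 * INR n + 1) / (2 * INR n * (INR n + 1)) - / INR n = - (1 / (2 * INR n * (INR n + 1))).
  field. lra.
have : 0 <= 1 / (2 * INR n * (INR n + 1)) by apply: div_nonneg; nra.
lra.
Qed.

Lemma Dp_inc_b z (hz : infinite_sum zeta2_series z) (zb : 1.64479 <= z <= 1.64508) N :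
  (60 <= N)%N -> 0 <= Dp z N.+1 - Dp z N <= 0.21 * (/ INR N - / INR N.+1).
Proof.
move=> N60. have N1 : (1 <= N)%N by apply: leq_trans N60.
have hn : 60 <= INR N by have := le_INR 60 N (ltac:(apply/leP; exact N60)); rewrite INR_IZR_INZ /=.
rewrite Dp_inc S_INR.
have [t1 t2] := tau_bounds z hz N N1. rewrite S_INR in t1.
have [d1 d2] := lnstep N N1. rewrite S_INR in d1 d2.
have d3 := hi_le_trap N N1. have d4 := lo_ge N N1.
set n := INR N in hn t1 t2 d1 d2 d3 d4 *.
set d := ln (n + 1) - ln n in d1 d2 *.
set s := s1 N in t1 t2 *.
have ninv : / n <= 1 by rewrite -Rinv_1; apply: Rinv_le_contravar; lra.
have s0 : 0 <= s by lra.
have dd : 0 <= 2 / (2 * n + 1) by apply: div_nonneg; lra.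
split.
- have h1 : s * d <= (z - / (n + 1)) * ((2 * n + 1) / (2 * n * (n + 1))).
    apply: Rmult_le_compat; lra.
  have E : z / (n + 1) - (z - / (n + 1)) * ((2 * n + 1) / (2 * n * (n + 1)))
     = ((2 - z) * n + 1 - z) / (2 * n * (n + 1) ^ 2) by field; lra.
  have P : 0 <= ((2 - z) * n + 1 - z) / (2 * n * (n + 1) ^ 2) by apply: div_nonneg; nra.
  lra.
- have h1 : (z - / n) * (2 / (2 * n + 1)) <= s * d.
    apply: Rmult_le_compat; lra.
  have E : z / (n + 1) - (z - / n) * (2 / (2 * n + 1)) = ((2 - z) * n + 2) / (n * (n + 1) * (2 * n + 1))
    by field; lra.
  have E2 : 21 / 100 * (/ n - / (n + 1)) - ((2 - z) * n + 2) / (n * (n + 1) * (2 * n + 1))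
     = ((z - 158 / 100) * n - 179 / 100) / (n * (n + 1) * (2 * n + 1)) by field; lra.
  have P : 0 <= ((z - 158 / 100) * n - 179 / 100) / (n * (n + 1) * (2 * n + 1)) by apply: div_nonneg; nra.
  lra.
Qed.

Lemma Dp_range z (hz : infinite_sum zeta2_series z) (zb : 1.64479 <= z <= 1.64508) k :
  Dp z 60 <= Dp z (60 + k) <= Dp z 60 + 0.21 * (/ 60 - / INR (60 + k)).
Proof.
elim: k => [|k IH].
- rewrite addn0. have -> : INR 60 = 60 by rewrite INR_IZR_INZ. lra.
- have := Dp_inc_b z hz zb (60 + k) (leq_addr _ _). rewrite addnS. lra.
Qed.

Lemma Q2R_e1 a b c d e : Q2R (a * b - c * d + e)%Q = Q2R a * Q2R b - Q2R c * Q2R d + Q2R e.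
Proof. by rewrite Q2R_plus Q2R_minus !Q2R_mult. Qed.

Lemma Q2R_e2 a b c : Q2R (a * b - c)%Q = Q2R a * Q2R b - Q2R c.
Proof. by rewrite Q2R_minus !Q2R_mult. Qed.

Lemma Hr_nonneg N : 0 <= Hr N.
Proof.
elim: N => [|N IH]; first by rewrite /Hr /=; lra.
have -> : Hr N.+1 = Hr N + / INR N.+1 by [].
have := INR_S_pos N. move=> h. have := Rinv_0_lt_compat _ h. lra.
Qed.

Lemma Sr_nonneg N : 0 <= Sr N.
Proof.
elim: N => [|N IH]; first by rewrite /Sr /=; lra.
rewrite Sr_S /term. have := INR_S_pos N => h.
have : 0 <= INR (phi N.+1) / INR N.+1 ^ 2 by apply: div_nonneg; [apply: pos_INR| nra].
lra.
Qed.

Lemma s1_nonneg N : 0 <= s1 N.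
Proof.
elim: N => [|N IH]; first by rewrite /s1 /=; lra.
have -> : s1 N.+1 = s1 N + / INR N.+1 ^ 2 by [].
have := INR_S_pos N => h. have : 0 < / INR N.+1 ^ 2 by apply: Rinv_0_lt_compat; nra.
lra.
Qed.


Open Scope R_scope.
Open Scope R_scope.

Lemma zlo_gen n : Q2R (s1Q n + qn 1 / qn n.+1)%Q = s1 n + / INR n.+1.
Proof.
have h := INR_S_pos n.
rewrite Q2R_plus s1Q_R Q2R_mult Q2R_inv' !Q2R_qn; change (INR 1) with 1; lra.
Qed.

Lemma zhi_gen n : (1 <= n)%N -> Q2R (s1Q n + qn 1 / qn n)%Q = s1 n + / INR n.
Proof.
move=> n1. have h := INR_ge1 n1.
rewrite Q2R_plus s1Q_R Q2R_mult Q2R_inv' !Q2R_qn; change (INR 1) with 1; lra.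
Qed.

Lemma Dp_lo_gen z (hz : infinite_sum zeta2_series z) n (a b : Z) (c : positive) : (1 <= n)%N ->
  Qle_bool (Qmake a c) ((s1Q n + qn 1 / qn n.+1) * HQ n - s1Q n * lnUQ n + TLQ n)%Q = true ->
  IZR a / IZR (Zpos c) <= Dp z n.
Proof.
move=> n1 H. have H' := Qle_R _ _ H.
rewrite Q2R_e1 zlo_gen HQ_R s1Q_R Q2R_mk in H'.
have [t1 _] := tau_bounds z hz n n1.
have h1 := lnUQ_ge n n1. have h2 := TLQ_le n.
have h3 := Hr_nonneg n. have h4 := s1_nonneg n.
rewrite /Dp.
have : (s1 n + / INR n.+1) * Hr n <= z * Hr n by apply: Rmult_le_compat_r; lra.
have : s1 n * ln (INR n) <= s1 n * Q2R (lnUQ n) by apply: Rmult_le_compat_l.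
lra.
Qed.

Lemma Dp_hi_gen z (hz : infinite_sum zeta2_series z) n (a b : Z) (c : positive) : (1 <= n)%N ->
  Qle_bool ((s1Q n + qn 1 / qn n) * HQ n - s1Q n * lnLQ n + TUQ n)%Q (Qmake a c) = true ->
  Dp z n <= IZR a / IZR (Zpos c).
Proof.
move=> n1 H. have H' := Qle_R _ _ H.
rewrite Q2R_e1 zhi_gen // HQ_R s1Q_R Q2R_mk in H'.
have [_ t1] := tau_bounds z hz n n1.
have h1 := lnLQ_le n n1. have h2 := TUQ_ge n.
have h3 := Hr_nonneg n. have h4 := s1_nonneg n.
rewrite /Dp.
have : z * Hr n <= (s1 n + / INR n) * Hr n by apply: Rmult_le_compat_r; lra.
have : s1 n * Q2R (lnLQ n) <= s1 n * ln (INR n) by apply: Rmult_le_compat_l.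
lra.
Qed.

Lemma Dp60_lo z (hz : infinite_sum zeta2_series z) : 1.8799 <= Dp z 60.
Proof.
have H : Qle_bool (Qmake 18799 10000) ((s1Q 60 + qn 1 / qn 61) * HQ 60 - s1Q 60 * lnUQ 60 + TLQ 60)%Q = true.
  vm_compute. reflexivity.
have := Dp_lo_gen z hz 60 18799 0 10000 is_true_true H.
lra.
Qed.

Lemma Dp60_hi z (hz : infinite_sum zeta2_series z) : Dp z 60 <= 1.8888.
Proof.
have H : Qle_bool ((s1Q 60 + qn 1 / qn 60) * HQ 60 - s1Q 60 * lnLQ 60 + TUQ 60)%Q (Qmake 18888 10000) = true.
  vm_compute. reflexivity.
have := Dp_hi_gen z hz 60 18888 0 10000 is_true_true H.
lra.
Qed.

Open Scope R_scope.
Open Scope R_scope.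

Lemma sr_split1 f N : (1 <= N)%N ->
  sr f N = f 1%N + sr (fun m => if (2 <= m)%N then f m else 0) N.
Proof.
elim: N => [//|N IH] _.
case: N IH => [|N] IH.
- simpl. lra.
- have -> : sr f N.+2 = sr f N.+1 + f N.+2 by [].
  have -> : sr (fun m => if (2 <= m)%N then f m else 0) N.+2 =
     sr (fun m => if (2 <= m)%N then f m else 0) N.+1 + f N.+2 by [].
  rewrite IH //. lra.
Qed.

Lemma tail20 N : 0 <= sr (fun m => if (21 <= m)%N then / INR m ^ 2 else 0) N <= / 20.
Proof.
suff H : forall N, 0 <= sr (fun m => if (21 <= m)%N then / INR m ^ 2 else 0) N <= / 20 - / INR (maxn N 20).
  have := H N. have : 0 < / INR (maxn N 20).
    apply: Rinv_0_lt_compat; apply: lt_0_INR; apply/ltP; rewrite leq_max; by rewrite orbT.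
  lra.
elim=> [|n IH].
- have -> : INR (maxn 0 20) = 20 by rewrite INR_IZR_INZ.
  have -> : sr (fun m => if (21 <= m)%N then / INR m ^ 2 else 0) 0 = 0 by [].
  lra.
- have -> : sr (fun m => if (21 <= m)%N then / INR m ^ 2 else 0) n.+1 =
    sr (fun m => if (21 <= m)%N then / INR m ^ 2 else 0) n + (if (21 <= n.+1)%N then / INR n.+1 ^ 2 else 0) by [].
  case: ifP => H.
  + have E1 : (maxn n.+1 20 = n.+1)%N by apply/maxn_idPl; lia.
    have E2 : (maxn n 20 = n)%N by apply/maxn_idPl; lia.
    rewrite E1; rewrite E2 in IH.
    have := inv_sq_le n (ltac:(lia)).
    have : 0 < / INR n.+1 ^ 2 by apply: Rinv_0_lt_compat; have := INR_S_pos n; nra.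
    lra.
  + have E1 : (maxn n.+1 20 = 20)%N by apply/maxn_idPr; lia.
    have E2 : (maxn n 20 = 20)%N by apply/maxn_idPr; lia.
    rewrite E1; rewrite E2 in IH. lra.
Qed.

Lemma s1_m1 N : (1 <= N)%N -> sr (fun m => if (2 <= m)%N then / INR m ^ 2 else 0) N = s1 N - 1.
Proof.
move=> N1. have E := sr_split1 (fun n => / INR n ^ 2) N N1. rewrite /s1 E. cbv beta.
change (INR 1) with 1. rewrite pow1 Rinv_1. ring.
Qed.

Lemma identR z N x : 0 < x ->
  z * Hr N - s1 N * ln x + Tr N = sr (fun m => (z * Sr (N %/ m) - ln (x / INR m)) / INR m ^ 2) N.
Proof.
move=> x0.
rewrite (sr_ext _ (fun m => z * (Sr (N %/ m) / INR m ^ 2) + (- ln x) * (/ INR m ^ 2) + ln (INR m) / INR m ^ 2)); last first.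
  move=> m /andP[m1 _]. have h := INR_ge1 m1.
  rewrite ln_div; [field; lra|lra|lra].
rewrite !sr_plus !sr_scal -ident. rewrite /s1 /Tr. ring.
Qed.

Definition chkp (a b : Q) (N : nat) : bool :=
  Qle_bool (Qmake 96 100) (a * SQ N - lnUQ N.+1)%Q && Qle_bool (b * SQ N - lnLQ N)%Q (Qmake 134 100).

Lemma base_gen z N (a b : Q) : (1 <= N)%N -> Q2R a <= z -> z <= Q2R b ->
  chkp a b N = true ->
  0.96 <= z * Sr N - ln (INR N.+1) /\ z * Sr N - ln (INR N) <= 1.34.
Proof.
move=> N1 ha hb Hc. have [H1 H2] := andb_prop _ _ Hc.
have L1 := lnUQ_ge N.+1 is_true_true. have L2 := lnLQ_le N N1.
have H1' := Qle_R _ _ H1. have H2' := Qle_R _ _ H2.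
rewrite Q2R_e2 SQ_R Q2R_mk in H1'. rewrite Q2R_e2 SQ_R Q2R_mk in H2'.
have h := Sr_nonneg N.
have : Q2R a * Sr N <= z * Sr N by apply: Rmult_le_compat_r.
have : z * Sr N <= Q2R b * Sr N by apply: Rmult_le_compat_r.
move: H1' H2' L1 L2. generalize (Q2R (lnUQ N.+1)) (Q2R (lnLQ N)) => u l.
lra.
Qed.

Lemma allchk : forallb (chkp zloQ zhiQ) (List.seq 3 57) = true.
Proof. vm_compute. reflexivity. Qed.

Lemma base_R z (hz : infinite_sum zeta2_series z) N : (3 <= N)%N -> (N < 60)%N ->
  0.96 <= z * Sr N - ln (INR N.+1) /\ z * Sr N - ln (INR N) <= 1.34.
Proof.
move=> N3 N60.
have Hc : chkp zloQ zhiQ N = true.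
  have := proj1 (forallb_forall (chkp zloQ zhiQ) (List.seq 3 57)) allchk N. apply.
  apply/in_seq. lia.
have [t1 t2] := tau_bounds z hz 60 is_true_true.
apply: (base_gen z N zloQ zhiQ _ _ _ Hc).
- lia.
- rewrite zloQ_R. have E : INR 61 = 61 by rewrite INR_IZR_INZ. rewrite E in t1. lra.
- rewrite zhiQ_R. have E : INR 60 = 60 by rewrite INR_IZR_INZ. rewrite E in t2. lra.
Qed.

Open Scope R_scope.
Open Scope R_scope.

Lemma z_bounds z (hz : infinite_sum zeta2_series z) : 1.64479 <= z <= 1.64508.
Proof.
have [t1 t2] := tau_bounds z hz 60 is_true_true.
have E1 : INR 61 = 61 by rewrite INR_IZR_INZ.
have E2 : INR 60 = 60 by rewrite INR_IZR_INZ.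
rewrite E1 in t1. rewrite E2 in t2.
have := num_z1. have := num_z2. lra.
Qed.

Lemma Sr1 : Sr 1 = 1.
Proof.
have t : totient 1 = 1%N by [].
have -> : Sr 1 = 0 + term 1 by [].
rewrite /term /phi t. change (INR 1) with 1. field.
Qed.

Lemma Sr2 : Sr 2 = 5 / 4.
Proof.
have t : totient 2 = 1%N by [].
rewrite Sr_S Sr1 /term /phi t.
have -> : INR 2 = 2 by rewrite INR_IZR_INZ.
change (INR 1) with 1. field.
Qed.

Lemma INR_le60 N : (60 <= N)%N -> 60 <= INR N.
Proof. move=> h. have := le_INR 60 N (ltac:(apply/leP; exact h)). by rewrite INR_IZR_INZ. Qed.

Definition Inv z N := forall x, INR N <= x < INR N + 1 ->
  (z - ln 2 < z * Sr N - ln x <= z) /\ ((3 <= N)%N -> 0.96 <= z * Sr N - ln x <= 1.34).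

Lemma term_bound z (zb : 1.64479 <= z <= 1.64508) (l2 : 0.69135 <= ln 2 <= 0.69445) N x
  (N60 : (60 <= N)%N) (IH : forall m, (m < N)%N -> (1 <= m)%N -> Inv z m)
  (hx : INR N <= x < INR N + 1) m : (1 <= m <= N)%N ->
  let g := (if (2 <= m)%N then (z * Sr (N %/ m) - ln (x / INR m)) / INR m ^ 2 else 0) in
  0.96 * (if (2 <= m)%N then / INR m ^ 2 else 0) - 0.01 * (if (21 <= m)%N then / INR m ^ 2 else 0) <= g /\
  g <= 1.34 * (if (2 <= m)%N then / INR m ^ 2 else 0) + (z - 1.34) * (if (21 <= m)%N then / INR m ^ 2 else 0).
Proof.
move=> /andP [m1 mN] g. rewrite /g.
case: (ltnP m 2) => [m2|m2].
- have -> : (21 <= m)%N = false by lia. lra.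
- have hm := INR_ge1 m1.
  have im : 0 < / INR m ^ 2 by apply: Rinv_0_lt_compat; nra.
  set N' := (N %/ m)%N.
  have N'1 : (1 <= N')%N by rewrite /N' divn_gt0 //; lia.
  have N'N : (N' < N)%N by rewrite /N'; apply: ltn_Pdiv; lia.
  have hx' : INR N' <= x / INR m < INR N' + 1.
    have e1 : INR N' * INR m <= INR N.
      rewrite -mult_INR. apply: le_INR. apply/leP. exact: leq_divM.
    have e2 : INR N + 1 <= (INR N' + 1) * INR m.
      rewrite -S_INR -S_INR -mult_INR. apply: le_INR. apply/leP. exact: ltn_ceil.
    split.
    + apply: (Rmult_le_reg_r (INR m)); first lra.
      rewrite /Rdiv Rmult_assoc Rinv_l; lra.
    + apply: (Rmult_lt_reg_r (INR m)); first lra.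
      rewrite /Rdiv Rmult_assoc Rinv_l; lra.
  have [A B] := IH N' N'N N'1 (x / INR m) hx'.
  rewrite /Rdiv.
  case: (ltnP m 21) => [m21|m21].
  + have N'3 : (3 <= N')%N by rewrite /N' leq_divRL; lia.
    have [B1 B2] := B N'3.
    split.
    * have : 0.96 * / INR m ^ 2 <= (z * Sr N' - ln (x / INR m)) * / INR m ^ 2 by apply: Rmult_le_compat_r; lra.
      lra.
    * have : (z * Sr N' - ln (x / INR m)) * / INR m ^ 2 <= 1.34 * / INR m ^ 2 by apply: Rmult_le_compat_r; lra.
      lra.
  + split.
    * have : 0.95 * / INR m ^ 2 <= (z * Sr N' - ln (x / INR m)) * / INR m ^ 2 by apply: Rmult_le_compat_r; lra.
      lra.
    * have : (z * Sr N' - ln (x / INR m)) * / INR m ^ 2 <= z * / INR m ^ 2 by apply: Rmult_le_compat_r; lra.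
      lra.
Qed.

Lemma step z (hz : infinite_sum zeta2_series z) N (N60 : (60 <= N)%N)
  (IH : forall m, (m < N)%N -> (1 <= m)%N -> Inv z m) x (hx : INR N <= x < INR N + 1) :
  0.96 <= z * Sr N - ln x <= 1.34.
Proof.
have zb := z_bounds z hz. have l2 := ln2_b.
have N1 : (1 <= N)%N by lia.
have hN := INR_le60 N N60.
have x0 : 0 < x by lra.
have I := identR z N x x0.
rewrite (sr_split1 _ N N1) in I.
have g1 : (z * Sr (N %/ 1) - ln (x / INR 1)) / INR 1 ^ 2 = z * Sr N - ln x.
  rewrite divn1. change (INR 1) with 1. rewrite (_ : x / 1 = x); last by field. field.
rewrite g1 in I.
set h := sr _ N in I.
have hup : h <= 1.34 * (s1 N - 1) + (z - 1.34) * sr (fun m => if (21 <= m)%N then / INR m ^ 2 else 0) N.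
  rewrite -(s1_m1 N N1) -sr_scal -sr_scal -sr_plus /h.
  apply: sr_le => m hm. exact: (proj2 (term_bound z zb l2 N x N60 IH hx m hm)).
have hlo : 0.96 * (s1 N - 1) - 0.01 * sr (fun m => if (21 <= m)%N then / INR m ^ 2 else 0) N <= h.
  rewrite -(s1_m1 N N1) -sr_scal -sr_scal.
  rewrite (_ : forall a b, a - b = a + - b); last by move=> *; ring.
  rewrite -sr_opp -sr_plus /h.
  apply: sr_le => m hm. have := (proj1 (term_bound z zb l2 N x N60 IH hx m hm)). lra.
have [E0 E1] := tail20 N.
move: hup hlo E0 E1. set E := sr _ N. move=> hup hlo E0 E1.
have [t1 t2] := tau_bounds z hz N N1.
have i60 : / INR N <= / 60 by apply: Rinv_le_contravar; lra.
have iN0 : 0 < / INR N by apply: Rinv_0_lt_compat; lra.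
have iN1 : 0 < / INR N.+1 by apply: Rinv_0_lt_compat; apply: INR_S_pos.
have [d1 d2] := lnstep N N1. have d3 := hi_le_inv N N1.
have lx1 : ln (INR N) <= ln x by apply: ln_le; lra.
have lx2 : ln x < ln (INR N.+1) by apply: ln_increasing; rewrite ?S_INR; lra.
have [D1 D2] := Dp_range z hz zb (N - 60).
rewrite (subnKC N60) in D1 D2.
have D3 := Dp60_lo z hz. have D4 := Dp60_hi z hz.
have s0 : 0 <= s1 N by apply: s1_nonneg.
set u := ln x - ln (INR N).
have u0 : 0 <= u by rewrite /u; lra.
have u1 : u <= / 60 by rewrite /u; lra.
have su1 : s1 N * u <= z * / 60 by apply: Rmult_le_compat; lra.
have su0 : 0 <= s1 N * u by apply: Rmult_le_pos.
have zE1 : (z - 1.34) * E <= (z - 1.34) * / 20 by apply: Rmult_le_compat_l; lra.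
have zE0 : 0 <= (z - 1.34) * E by apply: Rmult_le_pos; lra.
have Drel : z * Hr N - s1 N * ln x + Tr N = Dp z N - s1 N * u by rewrite /Dp /u; ring.
rewrite Drel in I.
split; lra.
Qed.

Lemma main z (hz : infinite_sum zeta2_series z) N : (1 <= N)%N -> Inv z N.
Proof.
have zb := z_bounds z hz. have l2 := ln2_b. have l32 := ln32_b.
elim/ltn_ind: N => N IH N1 x [hx1 hx2].
have hN := INR_ge1 N1.
have x0 : 0 < x by lra.
have lx1 : ln (INR N) <= ln x by apply: ln_le; lra.
have lx2 : ln x < ln (INR N.+1) by apply: ln_increasing; rewrite ?S_INR; lra.
case: (ltnP N 3) => [N3|N3].
- have : N = 1%N \/ N = 2%N by lia.
  case=> EN; subst N.
  + rewrite Sr1. change (INR 1) with 1 in lx1. rewrite ln_1 in lx1.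
    have E : INR 2 = 2 by rewrite INR_IZR_INZ.
    rewrite E in lx2. split; [lra|done].
  + rewrite Sr2. have E : INR 2 = 2 by rewrite INR_IZR_INZ.
    have E3 : INR 3 = 3 by rewrite INR_IZR_INZ.
    rewrite E in lx1. rewrite E3 in lx2. split; [lra|done].
- suff P : 0.96 <= z * Sr N - ln x <= 1.34 by split; [lra|done].
  case: (ltnP N 60) => [N60|N60].
  + have [b1 b2] := base_R z hz N N3 N60. lra.
  + exact: (step z hz N N60 IH x (conj hx1 hx2)).
Qed.

Open Scope R_scope.
Open Scope R_scope.

Lemma sumf_Sr N : sum_f 1 N.+1 term = Sr N.+1.
Proof.
rewrite /sum_f.
have -> : (N.+1 - 1)%coq_nat = N by lia.
elim: N => [|N IH].
- have -> : Sr 1 = 0 + term 1 by [].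
  change (sum_f_R0 (fun x0 : nat => term (x0 + 1)%coq_nat) 0) with (term (0 + 1)%coq_nat). rewrite Rplus_0_l. done.
- change (sum_f_R0 (fun x0 : nat => term (x0 + 1)%coq_nat) N.+1) with (sum_f_R0 (fun x0 : nat => term (x0 + 1)%coq_nat) N + term (N.+1 + 1)%coq_nat).
  rewrite IH (Sr_S N.+1) Nat.add_1_r. reflexivity.
Qed.

Theorem lemma2p3 (x : R) (hx : 1 <= x) (N : nat)
    (hN : INR N <= x < INR N + 1)
    (z : R) (hz : infinite_sum zeta2_series z) :
  ln x / z + 1 - ln 2 / z < sum_f 1 N term /\
  sum_f 1 N term <= ln x / z + 1.
Proof.
have N1 : (1 <= N)%N.
  case: N hN => [|N] hN' //. simpl in hN'. lra.
have [A _] := main z hz N N1 x hN.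
have zb := z_bounds z hz.
have z0 : 0 < / z by apply: Rinv_0_lt_compat; lra.
case: N N1 hN A => [//|N] _ hN A.
rewrite sumf_Sr.
set S := Sr N.+1 in A *.
have e1 : ln x / z + 1 - ln 2 / z = (ln x + z - ln 2) * / z by field; lra.
have e2 : ln x / z + 1 = (ln x + z) * / z by field; lra.
have e3 : S = (z * S) * / z by field; lra.
rewrite e1 e2 e3.
split.
- apply: Rmult_lt_compat_r => //; lra.
- apply: Rmult_le_compat_r; lra.
Qed.
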